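(* Let $\theta\in k$, let $\mathcal D$ be a set, let $RB$ be the free Rota--Baxter algebra of weight $\theta$ on $\mathcal D$ with Rota--Baxter map $R$, and let $\iota:GL\to RB$ be the canonical embedding of the Grossman--Larson algebra (the linear map with $\iota(e)=\mathbf 1$, sending the one-vertex tree decorated by $d$ to $d$, sending grafting of trees to $\triangleleft_\theta$ and the Grossman--Larson product of nonempty forests to $\ast_\theta$). Then for all $b_1,\ldots,b_n\in\mathcal D$ (viewed as one-vertex trees), the image of their commutative (forest) product is $$ \iota(b_1\cdots b_n)=\sum_{\sigma\in S_n}R\Big(\cdots R\big(R(b_{\sigma(1)})b_{\sigma(2)}\big)\cdots\Big)b_{\sigma(n)}. $$
   Context: $k$ is a field of characteristic zero. A Rota--Baxter algebra of weight $\theta$ is a unital associative algebra $A$ with linear $R:A\to A$ satisfying $R(x)R(y)=R(R(x)y+xR(y))+\theta R(xy)$. On it, $a\triangleleft_\theta b:=aR(b)-R(b)a+\theta ab$ and $a\ast_\theta b:=R(a)b+aR(b)+\theta ab$. Grossman--Larson algebra $GL$: $\mathcal T$ is the span of $\mathcal D$-decorated rooted trees with grafting $t\curvearrowleft t'$ (sum over vertices $v$ of $t$ of the tree obtained by joining $v$ to the root of $t'$), the free right pre-Lie algebra on $\mathcal D$; $GL=S(\mathcal T)$ is the span of forests (commutative monomials in trees, unit the empty forest $e$). Forests act on trees by $t\curvearrowleft e=t$, $t\curvearrowleft(t_1\cdots t_n)=(t\curvearrowleft(t_1\cdots t_{n-1}))\curvearrowleft t_n-\sum_{i=1}^{n-1}t\curvearrowleft(t_1\cdots(t_i\curvearrowleft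 t_n)\cdots t_{n-1})$, and the Grossman--Larson product is $(t_1\cdots t_n)\ast(t'_1\cdots t'_m)=\sum_f F_0(t_1\curvearrowleft F_1)\cdots(t_n\curvearrowleft F_n)$ over maps $f:\{1..m\}\to\{0..n\}$, $F_i=\prod_{j\in f^{-1}(i)}t'_j$. The map $\iota$ is well defined and injective. *)

(* Defs.v *)
From HB Require Import structures.
From mathcomp Require Import all_boot all_order all_algebra all_fingroup.
Set Implicit Arguments. Unset Strict Implicit. Unset Printing Implicit Defensive.
Import GRing.Theory.
Local Open Scope ring_scope.

Definition is_RB (k : fieldType) (A : algType k) (theta : k)
    (R : {linear A -> A}) : Prop :=
  forall x y : A, R x * R y = R (R x * y + x * R y) + theta *: R (x * y).

Definition rb_tri (k : fieldType) (A : algType k) (theta : k)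
    (R : {linear A -> A}) (a b : A) : A :=
  a * R b - R b * a + theta *: (a * b).

Definition rb_star (k : fieldType) (A : algType k) (theta : k)
    (R : {linear A -> A}) (a b : A) : A :=
  R a * b + a * R b + theta *: (a * b).

Definition free_RB (k : fieldType) (theta : k) (D : Type) (A : algType k)
    (R : {linear A -> A}) (i : D -> A) : Prop :=
  is_RB theta R /\
  forall (B : algType k) (P : {linear B -> B}), is_RB theta P ->
  forall f : D -> B,
    exists phi : {lrmorphism A -> B},
      [/\ (forall x, phi (R x) = P (phi x)),
          (forall d, phi (i d) = f d) &
          (forall psi : {lrmorphism A -> B},
             (forall x, psi (R x) = P (psi x)) ->
             (forall d, psi (i d) = f d) -> forall x, psi x = phi x)].

(* A tree is represented by a planar representative Node d children;   *)
(* a forest (commutative monomial of trees) by a list of trees.        *)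
(* Isomorphism of (unordered) trees/forests is [teq]/[feq].            *)

Inductive tree (D : Type) : Type := Node of D & seq (tree D).
Arguments Node {D}.

Definition forest (D : Type) := seq (tree D).

Inductive teq {D : Type} : tree D -> tree D -> Prop :=
| teq_node d cs cs' : feq cs cs' -> teq (Node d cs) (Node d cs')
with feq {D : Type} : seq (tree D) -> seq (tree D) -> Prop :=
| feq_nil : feq [::] [::]
| feq_cons t t' s s' : teq t t' -> feq s s' -> feq (t :: s) (t' :: s')
| feq_swap t t' s : feq (t :: t' :: s) (t' :: t :: s)
| feq_trans s1 s2 s3 : feq s1 s2 -> feq s2 s3 -> feq s1 s3.

Definition leaf {D : Type} (d : D) : tree D := Node d [::].

(* Grafting t <~ t' : the list (formal sum, coefficients 1) over the
   vertices v of t of the tree obtained by joining v to the root of t'. *)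
Fixpoint graft {D : Type} (t t' : tree D) : seq (tree D) :=
  match t with
  | Node d cs =>
      Node d (rcons cs t') ::
      (fix go (pre cs : seq (tree D)) : seq (tree D) :=
         match cs with
         | [::] => [::]
         | c :: cs' =>
             [seq Node d (pre ++ c' :: cs') | c' <- graft c t']
               ++ go (rcons pre c) cs'
         end) [::] cs
  end.

(* Action of forests on trees, following the recursive definition
   t <~ e = t,
   t <~ (t1..tn) = (t <~ (t1..t_{n-1})) <~ tn
                   - sum_{i<n} t <~ (t1..(ti <~ tn)..t_{n-1}),
   extended multilinearly.  Results are formal integer combinations. *)
Fixpoint act_aux {D : Type} (fuel : nat) (t : tree D) (F : forest D)
    : seq (int * tree D) :=
  match fuel with
  | 0 => [:: (1%Z, t)]
  | fuel'.+1 =>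
      if F is [::] then [:: (1%Z, t)] else
      let n := size F in
      let F0 := take n.-1 F in
      let tn := last t F in
      [seq (p.1, v) | p <- act_aux fuel' t F0, v <- graft p.2 tn]
      ++ [seq ((- q.1)%R, q.2)
         | i <- iota 0 n.-1,
           q <- flatten [seq act_aux fuel' t (set_nth t F0 i u)
                        | u <- graft (nth t F0 i) tn]]
  end.

Definition act {D : Type} (t : tree D) (F : forest D) : seq (int * tree D) :=
  act_aux (size F) t F.

Fixpoint prodexp {D : Type} (s : seq (seq (int * tree D)))
    : seq (int * forest D) :=
  match s with
  | [::] => [:: (1%Z, [::])]
  | x :: rest =>
      [seq ((p.1 * q.1)%R, p.2 :: q.2) | p <- x, q <- prodexp rest]
  end.

(* all maps f : {1..m} -> {0..n}, as sequences of length m *)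
Fixpoint maps_to (m n : nat) : seq (seq nat) :=
  match m with
  | 0 => [:: [::]]
  | m'.+1 => [seq i :: f | i <- iota 0 n.+1, f <- maps_to m' n]
  end.

(* Grossman--Larson product of forests:
   (t1..tn) * (t'1..t'm) = sum_f F_0 (t1 <~ F_1)...(tn <~ F_n),
   F_i = prod_{j in f^-1(i)} t'_j. *)
Definition glprod {D : Type} (F F' : forest D) : seq (int * forest D) :=
  flatten
    [seq let Fi := fun i => [seq p.2 | p <- zip f F' & p.1 == i] in
         [seq (q.1, Fi 0%N ++ q.2)
         | q <- prodexp [seq act p.2 (Fi p.1) | p <- zip (iota 1 (size F)) F]]
    | f <- maps_to (size F') (size F)].

Definition linF {D : Type} {V : zmodType} (f : forest D -> V)
    (s : seq (int * forest D)) : V :=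
  \sum_(p <- s) f p.2 *~ p.1.

Definition is_GL_embedding (k : fieldType) (theta : k) (D : Type)
    (A : algType k) (R : {linear A -> A}) (i : D -> A)
    (iota : forest D -> A) : Prop :=
  [/\ (forall F F', feq F F' -> iota F = iota F'),
      iota [::] = 1,
      (forall d, iota [:: leaf d] = i d),
      (forall t t' : tree D,
         \sum_(u <- graft t t') iota [:: u] = rb_tri theta R (iota [:: t]) (iota [:: t'])) &
      (forall F F' : forest D, F <> [::] -> F' <> [::] ->
         linF iota (glprod F F') = rb_star theta R (iota F) (iota F'))].

Definition rb_word (k : fieldType) (A : algType k) (R : {linear A -> A})
    (xs : seq A) : A :=
  if xs is x :: rest then foldl (fun acc y => R acc * y) x rest else 1.

(* Main.v *)
Set Warnings "-notation-overridden,-ambiguous-paths,-notation-incompatible-prefix".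
Require Import Defs.
From HB Require Import structures.
From mathcomp Require Import all_boot all_order all_algebra all_fingroup.
From mathcomp Require Import zify.
Set Implicit Arguments. Unset Strict Implicit. Unset Printing Implicit Defensive.
Import GRing.Theory.
Local Open Scope ring_scope.

Fixpoint Ssym (k : fieldType) (A : algType k) (R : {linear A -> A}) (m : nat) (x : nat -> A) : A :=
  match m with
  | 0 => 1
  | 1 => x 0%N
  | m'.+1 => \sum_(j < m) R (Ssym R m' (fun i => x (bump j i))) * x j
  end.

Arguments Ssym : simpl never.

Lemma Ssym1 (k : fieldType) (A : algType k) (R : {linear A -> A}) x : Ssym R 1 x = x 0%N.
Proof. by []. Qed.

Definition upd (A : Type) (x : nat -> A) (j : nat) (v : A) : nat -> A :=
  fun i => if i == j then v else x i.

Lemma SsymS (k : fieldType) (A : algType k) (R : {linear A -> A}) m x :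
  Ssym R m.+2 x = \sum_(j < m.+2) R (Ssym R m.+1 (fun i => x (bump j i))) * x j.
Proof. by []. Qed.

Lemma Ssym_ext (k : fieldType) (A : algType k) (R : {linear A -> A}) m x y :
  (forall i, (i < m)%N -> x i = y i) -> Ssym R m x = Ssym R m y.
Proof.
elim: m x y => [|[|m] IH] x y H //; first by rewrite !Ssym1 H.
rewrite !SsymS; apply: eq_bigr => j _; rewrite H // (IH _ (fun i => y (bump j i))) //.
move=> i Hi; apply: H; rewrite /bump; case: (j <= i)%N; rewrite /= ?add1n ?add0n //.
exact: ltn_trans Hi _.
Qed.

Lemma upd_bump (A : Type) (x : nat -> A) i j v i' : i != j ->
  upd x j v (bump i i') = upd (fun i' => x (bump i i')) (unbump i j) v i'.
Proof.
move=> Hij; rewrite /upd.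
have -> : (bump i i' == j) = (i' == unbump i j).
  apply/eqP/eqP => [<-|->]; first by rewrite bumpK.
  by rewrite unbumpK // inE eq_sym.
by [].
Qed.

Lemma upd_eq (A : Type) (x : nat -> A) j v : upd x j v j = v.
Proof. by rewrite /upd eqxx. Qed.

Lemma upd_neq (A : Type) (x : nat -> A) j v i : i != j -> upd x j v i = x i.
Proof. by rewrite /upd => /negbTE ->. Qed.

Lemma upd_bump_eq (A : Type) (x : nat -> A) j v i' :
  upd x j v (bump j i') = x (bump j i').
Proof. by rewrite /upd eq_sym (negbTE (neq_bump _ _)). Qed.

Lemma unbump_lt m i j : (i < m.+2)%N -> (j < m.+2)%N -> i != j -> (unbump i j < m.+1)%N.
Proof.
move=> Hi Hj /eqP Hij; rewrite /unbump.
case: (ltnP i j) => H /=; lia.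
Qed.

Lemma Ssym_upd_add (k : fieldType) (A : algType k) (R : {linear A -> A}) m x j a b :
  (j < m)%N -> Ssym R m (upd x j (a + b)) = Ssym R m (upd x j a) + Ssym R m (upd x j b).
Proof.
elim: m x j => [|[|m] IH] x j Hj //.
  by rewrite ltnS leqn0 in Hj; rewrite !Ssym1 (eqP Hj) /upd eqxx.
rewrite !SsymS -big_split; apply: eq_bigr => i _.
have [<-|Hij] := eqVneq (nat_of_ord i) j.
  rewrite !upd_eq mulrDr; congr (_ * _ + _ * _); congr (R _);
  by apply: Ssym_ext => i' _; rewrite !upd_bump_eq.
rewrite !upd_neq //.
rewrite (@Ssym_ext _ _ R _ _ (upd (fun i' => x (bump i i')) (unbump i j) (a + b))); last by move=> i' _; rewrite upd_bump.
rewrite (@Ssym_ext _ _ R _ (fun i' => upd x j a (bump i i')) (upd (fun i' => x (bump i i')) (unbump i j) a)); last by move=> i' _; rewrite upd_bump.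
rewrite (@Ssym_ext _ _ R _ (fun i' => upd x j b (bump i i')) (upd (fun i' => x (bump i i')) (unbump i j) b)); last by move=> i' _; rewrite upd_bump.
by rewrite IH ?unbump_lt // raddfD mulrDl.
Qed.

Lemma Ssym_upd_0 (k : fieldType) (A : algType k) (R : {linear A -> A}) m x j :
  (j < m)%N -> Ssym R m (upd x j 0) = 0.
Proof.
move=> Hj; have := Ssym_upd_add R x 0 0 Hj; rewrite addr0 => H.
by apply: (addrI (Ssym R m (upd x j 0))); rewrite addr0 -H.
Qed.

Lemma Ssym_upd_sum (k : fieldType) (A : algType k) (R : {linear A -> A}) m x j (T : Type) (s : seq T) (f : T -> A) :
  (j < m)%N -> Ssym R m (upd x j (\sum_(u <- s) f u)) = \sum_(u <- s) Ssym R m (upd x j (f u)).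
Proof.
move=> Hj; elim: s => [|u s IH]; first by rewrite !big_nil Ssym_upd_0.
by rewrite !big_cons Ssym_upd_add // IH.
Qed.


Lemma identity_base (k : fieldType) (A : algType k) (theta : k) (R : {linear A -> A}) x y :
  Ssym R 2 (upd x 1 y) + \sum_(j < 1) Ssym R 1 (upd x j (rb_tri theta R (x j) y))
  = rb_star theta R (Ssym R 1 x) y.
Proof.
rewrite SsymS !big_ord_recr !big_ord0 /= !Ssym1.
rewrite /upd /= /bump /= /rb_tri /rb_star add0n !add0r.
rewrite [R y * _ + _]addrC -!addrA; congr (_ + _).
by rewrite addrCA addNKr.
Qed.

Lemma shuf1 (V : zmodType) (c p q t : V) : c + (p - q + t) + (q - c) = p + t.
Proof. by rewrite addrC addrA subrK [_ + (p - q + t)]addrC -!addrA [- q + _]addrCA addNr addr0. Qed.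

Lemma RB_star (k : fieldType) (A : algType k) (theta : k) (R : {linear A -> A})
  (HR : is_RB theta R) a b : R (rb_star theta R a b) = R a * R b.
Proof.
rewrite HR /rb_star raddfD; congr (_ + _); exact: linearZZ.
Qed.

Lemma alg_step (k : fieldType) (A : algType k) (theta : k) (R : {linear A -> A})
  (HR : is_RB theta R) (s2 si xi y : A) :
  R s2 * xi + R si * rb_tri theta R xi y + R (rb_star theta R si y - s2) * xi
  = R si * xi * R y + theta *: (R si * xi * y).
Proof.
rewrite linearB /= (RB_star HR si y) mulrBl /rb_tri mulrDr mulrBr -scalerAr !mulrA.
exact: shuf1.
Qed.

Lemma Ssym_identity (k : fieldType) (A : algType k) (theta : k) (R : {linear A -> A})
  (HR : is_RB theta R) n x y :
  Ssym R n.+2 (upd x n.+1 y) + \sum_(j < n.+1) Ssym R n.+1 (upd x j (rb_tri theta R (x j) y))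
  = rb_star theta R (Ssym R n.+1 x) y.
Proof.
elim: n x => [|n IH] x; first exact: identity_base.
have E1 : Ssym R n.+3 (upd x n.+2 y) = R (Ssym R n.+2 x) * y
   + \sum_(i < n.+2) R (Ssym R n.+2 (upd (fun i' => x (bump i i')) n.+1 y)) * x i.
  rewrite SsymS big_ord_recr /= addrC; congr (_ + _).
    rewrite upd_eq; congr (R _ * _); apply: Ssym_ext => i' Hi'.
    by rewrite /bump leqNgt Hi' /= add0n upd_neq // ltn_eqF.
  apply: eq_bigr => i _; rewrite upd_neq ?ltn_eqF //; congr (R _ * _).
  apply: Ssym_ext => i' _; rewrite upd_bump ?ltn_eqF //.
  by rewrite /unbump ltn_ord subn1.
have E2 : \sum_(j < n.+2) Ssym R n.+2 (upd x j (rb_tri theta R (x j) y))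
  = \sum_(i < n.+2) (R (Ssym R n.+1 (fun i' => x (bump i i'))) * rb_tri theta R (x i) y
     + R (\sum_(j' < n.+1) Ssym R n.+1 (upd (fun i' => x (bump i i')) j'
             (rb_tri theta R (x (bump i j')) y))) * x i).
  under eq_bigr do rewrite SsymS.
  rewrite exchange_big; apply: eq_bigr => i _; rewrite (bigD1_ord i) //=; congr (_ + _).
    rewrite upd_eq; congr (R _ * _); apply: Ssym_ext => i' _; exact: upd_bump_eq.
  rewrite linear_sum mulr_suml; apply: eq_bigr => j' _ /=.
  rewrite upd_neq ?neq_bump //; congr (R _ * _); apply: Ssym_ext => i' _.
  by rewrite upd_bump ?neq_bump // bumpK.
rewrite E1 E2 [in RHS]/rb_star -!addrA; congr (_ + _).
rewrite [Ssym R n.+2 x]SsymS !mulr_suml scaler_sumr -!big_split; apply: eq_bigr => i _ /=.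
have -> : \sum_(j' < n.+1) Ssym R n.+1 (upd (fun i' => x (bump i i')) j'
             (rb_tri theta R (x (bump i j')) y))
   = rb_star theta R (Ssym R n.+1 (fun i' => x (bump i i'))) y
     - Ssym R n.+2 (upd (fun i' => x (bump i i')) n.+1 y).
  by rewrite -(IH (fun i' => x (bump i i'))) addrAC subrr add0r.
rewrite addrA; exact: alg_step.
Qed.

Lemma sum_perm_fix (V : nmodType) n (i0 j0 : 'I_n.+1) (g : 'S_n.+1 -> V) :
  \sum_(s : 'S_n.+1 | s i0 == j0) g s = \sum_(s : 'S_n) g (lift_perm i0 j0 s).
Proof.
rewrite (reindex (lift_perm i0 j0)); last first.
  pose ulsf i (s : 'S_n.+1) k := odflt k (unlift (s i) (s (lift i k))).
  have ulsfK i (s : 'S_n.+1) k: lift (s i) (ulsf i s k) = s (lift i k).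
    rewrite /ulsf; have:= neq_lift i k.
    by rewrite -(can_eq (permK s)) => /unlift_some[] ? ? ->.
  have inj_ulsf: injective (ulsf i0 _).
    move=> s; apply: can_inj (ulsf (s i0) s^-1%g) _ => k'.
    by rewrite {1}/ulsf ulsfK !permK liftK.
  exists (fun s => perm (inj_ulsf s)) => [s _ | s].
    by apply/permP=> k'; rewrite permE /ulsf lift_perm_lift lift_perm_id liftK.
  move/(s _ =P _) => si0; apply/permP=> k.
  case: (unliftP i0 k) => [k'|] ->; rewrite ?lift_perm_id //.
  by rewrite lift_perm_lift -si0 permE ulsfK.
by apply: eq_bigl => s; rewrite lift_perm_id eqxx.
Qed.

Lemma rb_word_rcons (k : fieldType) (A : algType k) (R : {linear A -> A}) ys z :
  ys != [::] -> rb_word R (rcons ys z) = R (rb_word R ys) * z.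
Proof. by case: ys => [//|a l] _; rewrite /= foldl_rcons. Qed.

Lemma perm_sum (k : fieldType) (A : algType k) (R : {linear A -> A}) m (f : 'I_m.+1 -> A) :
  \sum_(s : 'S_m.+1) rb_word R [seq f (s j) | j <- enum 'I_m.+1]
  = Ssym R m.+1 (fun i => f (inord i)).
Proof.
elim: m f => [|m IH] f.
  have E : enum 'I_1 = [:: ord0] by rewrite enum_ordSl; case: (enum 'I_0) (size_enum_ord 0).
  rewrite Ssym1 E /=.
  have -> : inord 0 = ord0 :> 'I_1 by apply: val_inj; rewrite /= inordK.
  rewrite (eq_bigr (fun _ => f ord0)) ?sumr_const ?card_Sn //.
  by move=> s _; rewrite [s ord0]ord1.
rewrite SsymS enum_ordSr.
rewrite (partition_big (fun s : 'S_m.+2 => s ord_max) xpredT) //=.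
apply: eq_bigr => j _.
rewrite sum_perm_fix.
have Ej : inord j = j by rewrite inord_val.
rewrite Ej (@Ssym_ext _ _ R _ _ (fun i => f (lift j (inord i)))); last first.
  move=> i Hi; congr f; apply: val_inj; rewrite /= !inordK //.
  exact: (@lift_subproof m.+2 j (Ordinal Hi)).
rewrite -(IH (fun i => f (lift j i))) linear_sum mulr_suml; apply: eq_bigr => s _.
rewrite map_rcons rb_word_rcons; last by rewrite -size_eq0 size_map size_map size_enum_ord.
rewrite lift_perm_id -map_comp; congr (R (rb_word R _) * _).
  apply: eq_map => i /=; congr f.
  have -> : widen_ord (leqnSn m.+1) i = lift ord_max i by apply: val_inj; rewrite /= /bump leqNgt ltn_ord.
  by rewrite lift_perm_lift.
Qed.

Lemma act_nil (D : Type) (t : tree D) : Defs.act t [::] = [:: (1%Z, t)].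
Proof. by []. Qed.

Lemma act_one (D : Type) (t t' : tree D) : Defs.act t [:: t'] = [seq (1%Z, v) | v <- graft t t'].
Proof. by rewrite /Defs.act /= !cats0. Qed.

Lemma allpairs1r (T1 T2 T3 : Type) (g : T1 -> T2 -> T3) (s : seq T1) (b : T2) :
  [seq g p q | p <- s, q <- [:: b]] = [seq g p b | p <- s].
Proof. by elim: s => //= a s ->. Qed.

Lemma allpairs1l (T1 T2 T3 : Type) (g : T1 -> T2 -> T3) (s : seq T2) (a : T1) :
  [seq g p q | p <- [:: a], q <- s] = [seq g a q | q <- s].
Proof. by rewrite /= cats0. Qed.

Lemma prodexp_gen (D : Type) (t : tree D) (F0 : forest D) c l :
  prodexp [seq Defs.act p.2 (if l == p.1 then [:: t] else [::]) | p <- zip (iota c (size F0)) F0]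
  = if (c <= l < c + size F0)%N
    then [seq (1%Z, set_nth t F0 (l - c) u) | u <- graft (nth t F0 (l - c)) t]
    else [:: (1%Z, F0)].
Proof.
elim: F0 c => [|a F1 IH] c /=; first by rewrite addn0 ltnNge andbN.
rewrite IH; case: (eqVneq l c) => [->|Hlc].
  rewrite act_one ltnn /= addnS leqnn ltnS leq_addr subnn /=.
  by elim: (graft a t) => //= v s ->.
rewrite act_nil allpairs1l.
have -> : (c.+1 <= l < c.+1 + size F1)%N = (c <= l < c + (size F1).+1)%N.
  by rewrite addSn addnS ltn_neqAle eq_sym Hlc.
case: ifP => H; last by [].
rewrite -map_comp; move: H => /andP[H1 _].
have -> : (l - c = (l - c.+1).+1)%N by move/eqP: Hlc; lia.
by apply: eq_map => u /=; rewrite mul1r.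
Qed.

Lemma Fi_eq (D : Type) (t : tree D) (i l : nat) :
  [seq p.2 | p <- zip [:: i] [:: t] & p.1 == l] = if i == l then [:: t] else [::].
Proof. by rewrite /=; case: (i == l). Qed.

Lemma maps_to1 n : maps_to 1 n = [seq [:: i] | i <- iota 0 n.+1].
Proof. by rewrite /= allpairs1r. Qed.

Lemma glprod_single (D : Type) (V : zmodType) (io : forest D -> V) (F0 : forest D) (t : tree D) :
  linF io (glprod F0 [:: t]) = io (t :: F0)
   + \sum_(j < size F0) \sum_(u <- graft (nth t F0 j) t) io (set_nth t F0 j u).
Proof.
have HA : forall l, [seq Defs.act p.2 [seq p0.2 | p0 <- zip [:: l] [:: t] & p0.1 == p.1]
                      | p <- zip (iota 1 (size F0)) F0]
    = [seq Defs.act p.2 (if l == p.1 then [:: t] else [::]) | p <- zip (iota 1 (size F0)) F0].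
  by move=> l; apply: eq_map => p; rewrite Fi_eq.
rewrite /linF /glprod maps_to1 big_flatten -map_comp big_map.
rewrite (eq_bigr (fun i => \sum_(q <- prodexp [seq Defs.act p.2 (if i == p.1 then [:: t] else [::])
                      | p <- zip (iota 1 (size F0)) F0])
         io ((if i == 0%N then [:: t] else [::]) ++ q.2) *~ q.1)); last first.
  by move=> i _; rewrite /comp HA big_map Fi_eq.
have -> : iota 0 (size F0).+1 = 0%N :: iota 1 (size F0) by [].
rewrite big_cons prodexp_gen /= big_seq1 mulr1z; congr (_ + _).
rewrite {1}(iotaDl 1 0) big_map -(big_mkord (fun _ => true) (fun j => \sum_(u <- graft (nth t F0 j) t) io (set_nth t F0 j u))) /index_iota subn0.
rewrite !big_seq; apply: eq_bigr => j; rewrite mem_iota add0n => Hj.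
rewrite prodexp_gen add1n ltnS Hj /= subSS subn0 big_map.
by apply: eq_bigr => u _ /=; rewrite mulr1z.
Qed.

Fixpoint teq_refl (D : Type) (t : tree D) {struct t} : teq t t :=
  match t with
  | Node d cs => teq_node d ((fix go (s : seq (tree D)) : feq s s :=
        match s with
        | [::] => feq_nil
        | c :: s' => feq_cons (teq_refl c) (go s')
        end) cs)
  end.

Lemma feq_refl (D : Type) (s : seq (tree D)) : feq s s.
Proof. elim: s => [|c s IH]; [exact: feq_nil | exact: feq_cons (teq_refl c) IH]. Qed.

Lemma feq_rot (D : Type) (t : tree D) (F : seq (tree D)) : feq (t :: F) (rcons F t).
Proof.
elim: F => [|a F IH] /=; first exact: feq_refl.
apply: feq_trans (feq_swap t a F) _.
exact: feq_cons (teq_refl a) IH.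
Qed.

Lemma iota_forest (k : fieldType) (theta : k) (D : Type) (A : algType k)
  (R : {linear A -> A}) (HR : is_RB theta R) (i : D -> A) (io : forest D -> A)
  (hiota : is_GL_embedding theta R i io) m (F : forest D) (t0 : tree D) :
  size F = m.+1 -> io F = Ssym R m.+1 (fun j => io [:: nth t0 F j]).
Proof.
case: hiota => H1 H2 H3 H4 H5.
elim: m F t0 => [|m IH] F t0 HF.
  rewrite Ssym1; case: F HF => [|t [|]] //= _.
case/lastP: F HF => [//|F0 t]; rewrite size_rcons => -[HF0].
have E0 : io (rcons F0 t) = io (t :: F0) by symmetry; apply: H1; exact: feq_rot.
have E1 := H5 F0 [:: t].
rewrite glprod_single in E1.
have nF0 : F0 <> [::] by move=> E; rewrite E in HF0.
have {}E1 := E1 nF0 ltac:(by []).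
pose x := fun j => io [:: nth t F0 j].
pose y := io [:: t].
have E2 : \sum_(j < size F0) \sum_(u <- graft (nth t F0 j) t) io (set_nth t F0 j u)
   = \sum_(j < m.+1) Ssym R m.+1 (upd x j (rb_tri theta R (x j) y)).
  rewrite HF0; apply: eq_bigr => j _.
  rewrite -H4 Ssym_upd_sum //; apply: eq_bigr => u _.
  rewrite (IH _ t); last by rewrite size_set_nth HF0; apply/maxn_idPr.
  apply: Ssym_ext => i' Hi'; rewrite nth_set_nth /= /upd.
  by case: (i' == j).
rewrite E2 (IH F0 t HF0) -/x in E1.
rewrite E0.
have -> : io (t :: F0) = Ssym R m.+2 (upd x m.+1 y).
  apply: (addIr (\sum_(j < m.+1) Ssym R m.+1 (upd x j (rb_tri theta R (x j) y)))).
  rewrite E1; exact: esym (Ssym_identity HR m x y).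
apply: Ssym_ext => j Hj; rewrite nth_rcons HF0 /upd.
case: ltnP => Hjm.
  by rewrite (ltn_eqF Hjm) /x (set_nth_default t0) // HF0.
have -> : j = m.+1 by apply/eqP; rewrite eqn_leq Hjm -ltnS Hj.
by rewrite eqxx.
Qed.

Unset Implicit Arguments.

Theorem theorem3p5 (k : fieldType) (hk : [pchar k] =i pred0) (theta : k)
    (D : Type) (A : algType k) (R : {linear A -> A}) (i : D -> A)
    (hfree : free_RB theta R i)
    (iota : forest D -> A) (hiota : is_GL_embedding theta R i iota)
    (n : nat) (b : 'I_n.+1 -> D) :
  iota [seq leaf (b j) | j <- enum 'I_n.+1]
  = \sum_(s : 'S_n.+1) rb_word R [seq i (b (s j)) | j <- enum 'I_n.+1].
Proof.
have HR : is_RB theta R by case: hfree.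
rewrite (perm_sum R (fun x => i (b x))).
rewrite (@iota_forest _ _ _ _ _ HR _ _ hiota n _ (leaf (b ord0))); last by rewrite size_map size_enum_ord.
case: hiota => _ _ H3 _ _.
apply: Ssym_ext => j Hj.
rewrite (nth_map ord0) ?size_enum_ord // H3; congr (i (b _)).
by apply: val_inj; rewrite /= nth_enum_ord // inordK.
Qed.
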